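(* Let $D$ be a regular $(v,k,\lambda,\mu)$-PDS in a finite group $G$ with $0<\mu<k$ and $\sqrt\Delta\in\mathbb{Z}$. Let $H$ be a nontrivial subgroup of the group of linear characters of $G$ all of whose elements have order coprime to $\sqrt\Delta$, let $N=\bigcap_{\xi\in H}\ker\xi$, and let $\theta_\alpha$ denote the common value $\xi(D)$ of the nonprincipal $\xi\in H$. Then for every $a\in G\setminus N$, \[|Na\cap D|=\frac{k-\theta_\alpha}{|H|}.\]
   Context: A $(v,k,\lambda,\mu)$-PDS in a group $G$ of order $v$ is a $k$-subset $D$ such that every nonidentity element of $D$ is $xy^{-1}$ ($x,y\in D$) in exactly $\lambda$ ways and every nonidentity element of $G\setminus D$ in exactly $\mu$ ways; regular means $D=D^{(-1)}$ and $1\notin D$. $\Delta=(\lambda-\mu)^2+4(k-\mu)$. All nonprincipal characters in such an $H$ take the same value on $D$, where $\chi(D)=\sum_{d\in D}\chi(d)$. *)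

(* Defs.v *)
From mathcomp Require Import all_boot all_order all_algebra all_fingroup all_solvable all_field all_character.
Set Implicit Arguments. Unset Strict Implicit. Unset Printing Implicit Defensive.
Import GRing.Theory Num.Theory.

Local Open Scope group_scope.

Definition pds_count (gT : finGroupType) (D : {set gT}) (g : gT) : nat :=
  #|[set p : gT * gT | (p.1 \in D) && (p.2 \in D) && (p.1 * p.2^-1 == g)]|.

Definition is_PDS (gT : finGroupType) (G : {group gT}) (D : {set gT})
    (v k lam mu : nat) : Prop :=
  [/\ D \subset G, #|G| = v, #|D| = k &
      forall g, g \in G -> g != 1 ->
        pds_count D g = (if g \in D then lam else mu)].

Definition is_regular_PDS (gT : finGroupType) (G : {group gT}) (D : {set gT})
    (v k lam mu : nat) : Prop :=
  [/\ is_PDS G D v k lam mu, D^-1 = D & 1 \notin D].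

Definition pds_Delta (k lam mu : nat) : int :=
  ((lam%:Z - mu%:Z) ^+ 2 + 4 * (k%:Z - mu%:Z))%R.

Definition cf_on_set (gT : finGroupType) (G : {group gT}) (xi : 'CF(G))
    (D : {set gT}) : algC := (\sum_(d in D) xi d)%R.

(* Main.v *)
Require Import Defs.
From mathcomp Require Import all_boot all_order all_algebra all_fingroup all_solvable all_field all_character.
From mathcomp Require Import ring zify.
Import GRing.Theory Num.Theory.
Local Open Scope ring_scope.
Lemma dvdA_mulr (e y : algC) : y \in Aint -> (e %| y * e)%A.
Proof. by move=> Ay; rewrite -eqAmod0 eqAmodMl0. Qed.

Lemma frob_bin p (a b : algC) : prime p -> a \in Aint -> b \in Aint ->
  eqAmod p%:R ((a + b) ^+ p) (a ^+ p + b ^+ p).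
Proof.
move=> pp Aa Ab; have p_gt1 := prime_gt1 pp.
case: p pp p_gt1 => [|[|p']] // pp _.
rewrite exprDn big_ord_recr big_ord_recl /= !subnn !expr0 !mulr1 mul1r subn0.
rewrite !bin0 binn !mulr1n /eqAmod.
rewrite (_ : forall x y z : algC, x + y + z - (x + z) = y); last first.
  by move=> x y z; ring.
apply: rpred_sum => i _.
have /dvdnP[m ->] : (p'.+2 %| 'C(p'.+2, bump 0 i))%N.
  apply: prime_dvd_bin => //; by rewrite /bump /= add1n ltnS ltn_ord.
rewrite mulrnA -[_ *+ p'.+2]mulr_natr; apply: dvdA_mulr.
by rewrite rpredMn // rpredM // rpredX.
Qed.

Arguments frob_bin {p a b}.
Lemma frob_sum p (I : finType) (A : {pred I}) (F : I -> algC) : prime p ->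
  (forall i, F i \in Aint) ->
  eqAmod p%:R ((\sum_(i in A) F i) ^+ p) (\sum_(i in A) F i ^+ p).
Proof.
move=> pp AF.
suff [] : (\sum_(i in A) F i) \in Aint /\
   eqAmod p%:R ((\sum_(i in A) F i) ^+ p) (\sum_(i in A) F i ^+ p) by [].
apply: (big_ind2 (fun x y => x \in Aint /\ eqAmod p%:R (x ^+ p) y)).
- by rewrite rpred0 expr0n gtn_eqF ?prime_gt0.
- move=> x1 x2 y1 y2 [Ax1 E1] [Ax2 E2]; split; first exact: rpredD.
  have h1 := frob_bin pp Ax1 Ax2.
  have h2 := eqAmodD E1 E2.
  exact: (eqAmod_trans h1 h2).
- by move=> i _; split.
Qed.
Lemma fermat_int p (z : algC) : prime p -> z \is a Num.int ->
  eqAmod p%:R (z ^+ p) z.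
Proof.
move=> pp /intrP[m ->].
have p_gt0 := prime_gt0 pp.
set n := `|m|%N.
have hk : (0 <= m + (p * n)%N%:Z)%R by rewrite /n; nia.
set k := absz (m + Posz (p * n))%R.
have hkE : (k%:R : algC) = m%:~R + (p * n)%:R.
  have : Posz k = (m + Posz (p * n))%R by rewrite /k; nia.
  move/(congr1 (fun z : int => (z%:~R : algC))).
  by move=> h; rewrite -[k%:R]/((Posz k)%:~R) h rmorphD.
set y := (m%:~R : algC); set b := ((p * n)%:R : algC).
have Ax : y \in Aint by apply: Aint_int.
have Ab : b \in Aint by rewrite /b rpred_nat.
have h1 := frob_bin pp Ax Ab.
have h2 : eqAmod p%:R (b ^+ p) 0.
  by rewrite /b -natrX eqAmod0_nat dvdn_exp // dvdn_mulr.
have h3 : eqAmod p%:R (k%:R ^+ p) k%:R.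
  by rewrite -natrX eqAmod_nat; apply/eqP; apply: fermat_little.
have h4 : eqAmod p%:R k%:R y.
  by rewrite /eqAmod hkE addrC addKr /b natrM mulrC dvdA_mulr // rpred_nat.
have h5 : eqAmod p%:R (y ^+ p + b ^+ p) (y ^+ p).
  by rewrite -[X in eqAmod _ _ X]addr0 eqAmodDl.
rewrite eqAmod_sym in h5; rewrite eqAmod_sym in h1.
apply: eqAmod_trans h5 _; apply: eqAmod_trans h1 _.
rewrite -hkE; exact: eqAmod_trans h3 h4.
Qed.

Lemma quad_int (x b c s : algC) : x ^+ 2 = c + b * x -> s ^+ 2 = b ^+ 2 + 4 * c ->
  b \in Crat -> s \in Crat -> x \in Aint -> x \is a Num.int.
Proof.
move=> hx hs Qb Qs Ax; apply: Cint_rat_Aint => //.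
have h : (2 * x - b) ^+ 2 == s ^+ 2.
  apply/eqP; rewrite hs (_ : (2 * x - b) ^+ 2 = 4 * x ^+ 2 - 4 * (b * x) + b ^+ 2); last by ring.
  rewrite hx; ring.
have -> : x = (b + (2 * x - b)) / 2.
  by rewrite addrC subrK mulrC mulKf // pnatr_eq0.
rewrite eqf_sqr in h; case/orP: h => /eqP ->; apply: rpred_div; rewrite ?rpred_nat //.
  exact: rpredD.
by rewrite rpredD // rpredN.
Qed.

Lemma quad_cong (x y b c : algC) (s q : nat) : x ^+ 2 = c + b * x -> y ^+ 2 = c + b * y ->
  s%:R ^+ 2 = b ^+ 2 + 4 * c -> x \in Aint -> y \in Aint -> prime q ->
  ~~ (q %| s)%N -> eqAmod q%:R x y -> x = y.
Proof.
move=> hx hy hs Ax Ay pq nqs exy; case: (eqVneq x y) => // nxy.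
have hxy : x + y = b.
  have : (x - y) * (x + y - b) = 0.
    transitivity (x ^+ 2 - y ^+ 2 - b * (x - y)); first by ring.
    rewrite hx hy; ring.
  move/eqP; rewrite mulf_eq0 subr_eq0 (negbTE nxy) /= subr_eq0 => /eqP //.
have hc : c = x ^+ 2 - b * x by rewrite hx addrK.
have hd : (x - y) * (x - y) = s%:R ^+ 2.
  rewrite hs hc -hxy; ring.
have : eqAmod q%:R ((x - y) * (x - y)) (0 * (x - y)).
  apply: eqAmodMr; first by rewrite rpredB.
  by rewrite /eqAmod subr0.
by rewrite mul0r hd -natrX eqAmod0_nat Euclid_dvdX // (negbTE nqs).
Qed.
Lemma lin_sum0 (gT : finGroupType) (G : {group gT}) (xi : 'CF(G)) :
  xi \is a linear_char -> xi != 1 -> \sum_(g in G) xi g = 0.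
Proof.
move=> lxi nt.
have [h Gh xh1] : exists2 h, h \in G & xi h != 1.
  case: (pickP [pred h in G | xi h != 1]) => [h /= /andP[Gh xh] | none].
    by exists h.
  exfalso; move/negP: nt; apply; apply/eqP/cfun_inP => x Gx; rewrite cfun1E Gx.
  by move: (none x); rewrite /= Gx /=; move/negbFE/eqP.
have hS : \sum_(g in G) xi g = xi h * \sum_(g in G) xi g.
  rewrite mulr_sumr [LHS](reindex_inj (mulgI h)) /=.
  apply: eq_big; first by move=> g; rewrite /= groupMl.
  by move=> g; rewrite groupMl // => Gg; rewrite lin_charM.
have : (1 - xi h) * \sum_(g in G) xi g = 0 by rewrite mulrBl mul1r -hS subrr.
by move/eqP; rewrite mulf_eq0 subr_eq0 eq_sym (negbTE xh1) /= => /eqP.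
Qed.

Lemma pds_count1 (gT : finGroupType) (D : {set gT}) : pds_count D 1 = #|D|.
Proof.
rewrite /pds_count.
have -> : [set p : gT * gT | (p.1 \in D) && (p.2 \in D) && (p.1 * p.2^-1 == 1)%g]
   = [set (x, x) | x in D].
  apply/setP => [[x y]]; rewrite inE /= -eq_mulgV1.
  apply/idP/imsetP => [/andP[/andP[Dx _] /eqP <-] | [z Dz [-> ->]]].
    by exists x.
  by rewrite Dz eqxx.
by rewrite card_imset // => x y [].
Qed.

Lemma sum_inv (gT : finGroupType) (D : {set gT}) (F : gT -> algC) :
  (D^-1)%g = D -> \sum_(y in D) F y = \sum_(y in D) F (y^-1)%g.
Proof.
move=> DV; rewrite [LHS](reindex_inj invg_inj) /=.
by apply: eq_bigl => y; rewrite -memV_invg invgK DV.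
Qed.

Lemma sum_ind (gT : finGroupType) (G : {group gT}) (A : {set gT}) (F : gT -> algC) :
  A \subset G -> \sum_(g in G) (g \in A)%:R * F g = \sum_(g in A) F g.
Proof.
move=> sAG.
transitivity (\sum_(g in G) (if g \in A then F g else 0)).
  by apply: eq_bigr => g _; case: (g \in A); rewrite ?mul1r ?mul0r.
rewrite -big_mkcondr; apply: eq_bigl => g.
by case: (boolP (g \in A)) => [/(subsetP sAG) -> | ]; rewrite ?andbF ?andbT.
Qed.

Lemma pds_quad (gT : finGroupType) (G : {group gT}) (D : {set gT}) v k lam mu
  (xi : 'CF(G)) : is_regular_PDS G D v k lam mu -> xi \is a linear_char -> xi != 1 ->
  cf_on_set xi D ^+ 2 = (k%:R - mu%:R) + (lam%:R - mu%:R) * cf_on_set xi D.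
Proof.
case => [[sDG _ cardD hcount] DV D1] lxi nt.
have DG x : x \in D -> x \in G := subsetP sDG x.
have E1 : cf_on_set xi D ^+ 2 = \sum_(g : gT) xi g *+ pds_count D g.
  rewrite expr2 {1}/cf_on_set mulr_suml.
  transitivity (\sum_(x in D) \sum_(y in D) xi (x * y^-1)%g).
    apply: eq_bigr => x Dx; rewrite /cf_on_set (@sum_inv _ _ xi DV) mulr_sumr.
    by apply: eq_bigr => y Dy; rewrite lin_charM ?groupV ?DG.
  rewrite pair_big /= (partition_big (fun p : gT * gT => (p.1 * p.2^-1)%g) xpredT) //=.
  apply: eq_bigr => g _.
  transitivity (\sum_(i in [set p : gT * gT | (p.1 \in D) && (p.2 \in D) && (p.1 * p.2^-1 == g)%g]) xi g).
    apply: eq_big => i; first by rewrite inE.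
    by move=> /andP[_ /eqP ->].
  by rewrite sumr_const.
rewrite E1 (bigID (fun g => g \in G)) /= [X in _ + X]big1 ?addr0; last first.
  by move=> g /cfun0 ->; rewrite mul0rn.
have E2 g : g \in G -> xi g *+ pds_count D g = mu%:R * xi g +
   (lam%:R - mu%:R) * ((g \in D)%:R * xi g) + (k%:R - mu%:R) * ((g \in [set 1%g])%:R * xi g).
  move=> Gg; rewrite in_set1; case: (eqVneq g 1%g) => [-> | ng1].
    rewrite pds_count1 cardD (negbTE D1) -[true%:R]/(1 : algC) -[false%:R]/(0 : algC) mul0r mul1r -mulr_natl; ring.
  rewrite hcount //; case: (g \in D); rewrite -?[true%:R]/(1 : algC) -?[false%:R]/(0 : algC) ?mul0r ?mul1r -mulr_natl; ring.
rewrite (eq_bigr _ E2) !big_split /= -!mulr_sumr !sum_ind ?sub1set ?group1 //.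
by rewrite lin_sum0 // big_set1 lin_char1 // mulr0 add0r mulr1 addrC.
Qed.
Lemma uniform (gT : finGroupType) (G : {group gT}) (H : seq 'CF(G)) (s : nat)
  (V : 'CF(G) -> algC) :
  {in H, forall xi, xi \is a linear_char} ->
  1 \in H -> {in H &, forall a b, a * b \in H} ->
  {in H, forall xi, coprime #[xi]%CF s} ->
  (forall xi psi q, xi \in H -> psi \in H -> xi != 1 -> psi != 1 -> prime q ->
     ~~ (q %| s)%N -> eqAmod q%:R (V xi) (V psi) -> V xi = V psi) ->
  (forall xi q, xi \in H -> prime q -> eqAmod q%:R (V xi) (V (xi ^+ q))) ->
  forall xi psi, xi \in H -> psi \in H -> xi != 1 -> psi != 1 -> V xi = V psi.
Proof.
move=> Hlin H1 HM Hcop HE HF.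
have powH (xi : 'CF(G)) n : xi \in H -> xi ^+ n \in H.
  move=> Hxi; elim: n => [|n IH]; first by rewrite expr0.
  by rewrite exprS HM.
have ndiv (xi : 'CF(G)) q : xi \in H -> prime q -> (q %| #[xi]%CF)%N -> ~~ (q %| s)%N.
  move=> Hxi pq qo; rewrite -prime_coprime //.
  exact: coprime_dvdl qo (Hcop _ Hxi).
have ord_nt (xi : 'CF(G)) : xi != 1 -> #[xi]%CF != 1%N.
  move=> nt; apply: contra nt => /eqP o1.
  by have := dvdn_cforder xi 1; rewrite o1 dvdnn expr1 => <-.
have prime_nt (xi : 'CF(G)) : prime #[xi]%CF -> xi != 1.
  move=> po; apply/eqP => x1; move: po; rewrite x1.
  have : (#[(1 : 'CF(G))]%CF %| 1)%N by rewrite dvdn_cforder expr1.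
  by rewrite dvdn1 => /eqP ->.
have B n (xi : 'CF(G)) : xi \in H -> xi != 1 -> (#[xi]%CF <= n)%N ->
    exists2 chi, chi \in H & prime #[chi]%CF /\ V chi = V xi.
  elim: n xi => [|n IH] xi Hxi nt.
    by rewrite leqn0 (gtn_eqF (cforder_lin_char_gt0 (Hlin _ Hxi))).
  move=> le_o.
  set o := #[xi]%CF.
  have o_gt0 : (0 < o)%N := cforder_lin_char_gt0 (Hlin _ Hxi).
  have o_gt1 : (1 < o)%N by rewrite ltn_neqAle eq_sym ord_nt.
  case: (boolP (prime o)) => [po | npo]; first by exists xi.
  set q := pdiv o.
  have pq : prime q := pdiv_prime o_gt1.
  have qo : (q %| o)%N := pdiv_dvd o.
  have nqs := ndiv _ _ Hxi pq qo.
  have ntq : xi ^+ q != 1.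
    apply: contra npo; rewrite -dvdn_cforder => /(prime_nt_dvdP pq (ord_nt _ nt)).
    by rewrite -/o => ->.
  have Vq : V xi = V (xi ^+ q) := HE _ _ _ Hxi (powH _ _ Hxi) nt ntq pq nqs (HF _ _ Hxi pq).
  have lt : (#[xi ^+ q]%CF < o)%N.
    have d : (#[xi ^+ q]%CF %| o %/ q)%N.
      by rewrite dvdn_cforder -exprM mulnC divnK // exp_cforder.
    apply: leq_ltn_trans (dvdn_leq _ d) _.
      by rewrite divn_gt0 ?prime_gt0 // dvdn_leq.
    by rewrite ltn_Pdiv // prime_gt1.
  have [chi Hchi [pchi Vchi]] := IH _ (powH _ _ Hxi) ntq (leq_trans (ltnSE (leq_trans lt le_o)) (leqnn _)).
  by exists chi => //; split => //; rewrite Vchi Vq.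
have Vq1 (chi : 'CF(G)) : chi \in H -> prime #[chi]%CF ->
    eqAmod #[chi]%CF%:R (V chi) (V 1).
  by move=> Hc pc; rewrite -(exp_cforder chi); apply: HF.
have C1 (chi1 chi2 : 'CF(G)) : chi1 \in H -> chi2 \in H -> prime #[chi1]%CF ->
    prime #[chi2]%CF -> #[chi1]%CF != #[chi2]%CF -> V (chi1 * chi2) = V chi2.
  move=> H1c H2c p1 p2 n12.
  set q := #[chi1]%CF.
  have nqs : ~~ (q %| s)%N := ndiv _ _ H1c p1 (dvdnn _).
  have ntq : chi2 ^+ q != 1.
    by apply: contra n12; rewrite -dvdn_cforder dvdn_prime2 // => /eqP ->.
  have Hr : chi1 * chi2 \in H := HM _ _ H1c H2c.
  have rq : (chi1 * chi2) ^+ q = chi2 ^+ q by rewrite exprMn /q exp_cforder mul1r.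
  have ntr : chi1 * chi2 != 1.
    by apply: contra ntq => /eqP e; rewrite -rq e; apply/eqP; apply: expr1n.
  apply: (HE _ _ _ Hr H2c ntr (prime_nt _ p2) p1 nqs).
  have h1 := HF _ _ Hr p1; rewrite rq in h1.
  have h2 := HF _ _ H2c p1; rewrite eqAmod_sym in h2.
  exact: eqAmod_trans h1 h2.
have C (chi1 chi2 : 'CF(G)) : chi1 \in H -> chi2 \in H -> prime #[chi1]%CF ->
    prime #[chi2]%CF -> V chi1 = V chi2.
  move=> H1c H2c p1 p2.
  case: (eqVneq #[chi1]%CF #[chi2]%CF) => [e | ne].
    apply: (HE _ _ _ H1c H2c (prime_nt _ p1) (prime_nt _ p2) p1 (ndiv _ _ H1c p1 (dvdnn _))).
    have h1 := Vq1 _ H1c p1; have h2 := Vq1 _ H2c p2.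
    rewrite -e eqAmod_sym in h2; exact: eqAmod_trans h1 h2.
  rewrite -(C1 _ _ H1c H2c p1 p2 ne) -(C1 _ _ H2c H1c p2 p1) 1?eq_sym //.
  by rewrite mulrC.
move=> xi psi Hxi Hpsi nxi npsi.
have [c1 Hc1 [p1 V1]] := B _ _ Hxi nxi (leqnn _).
have [c2 Hc2 [p2 V2]] := B _ _ Hpsi npsi (leqnn _).
by rewrite -V1 -V2; apply: C.
Qed.

Lemma mem_bigcap_seq (gT : finGroupType) (I : Type) (r : seq I) (F : I -> {set gT}) g :
  (g \in \bigcap_(i <- r) F i) = all (fun i => g \in F i) r.
Proof.
elim: r => [|i r IH]; first by rewrite big_nil inE.
by rewrite big_cons inE IH.
Qed.

Lemma lin_ker1 (gT : finGroupType) (G : {group gT}) (chi : 'CF(G)) g :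
  chi \is a linear_char -> g \in G -> (g \in cfker chi) = (chi g == 1).
Proof.
move=> lc Gg; rewrite cfkerEchar ?lin_charW // inE Gg lin_char1 //.
Qed.

Lemma sum_ind2 (gT : finGroupType) (A B : {set gT}) :
  \sum_(g in B) ((g \in A)%:R : algC) = #|A :&: B|%:R.
Proof.
transitivity (\sum_(g in B) (if g \in A then (1 : algC) else 0)).
  by apply: eq_bigr => g _; case: (g \in A).
rewrite -big_mkcondr sumr_const; congr (_ *+ _).
by apply: eq_card => g; rewrite !inE andbC.
Qed.

Lemma sum_seq1 (T : Type) (r : seq T) : \sum_(i <- r) (1 : algC) = (size r)%:R.
Proof. by rewrite -sum1_size natr_sum. Qed.

Theorem mainTheorem13 (gT : finGroupType) (G : {group gT}) (D : {set gT})
    (v k lam mu : nat) (s : nat) (H : seq 'CF(G)) :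
  is_regular_PDS G D v k lam mu ->
  (0 < mu < k)%N ->
  (s%:Z ^+ 2)%R = pds_Delta k lam mu ->
  (* H is a nontrivial subgroup of the group of linear characters of G *)
  uniq H ->
  {in H, forall xi, xi \is a linear_char} ->
  (1%R : 'CF(G)) \in H ->
  {in H &, forall xi1 xi2, (xi1 * xi2)%R \in H} ->
  (exists2 xi, xi \in H & xi != 1%R) ->
  (* every element of H has order coprime to sqrt(Delta) *)
  {in H, forall xi, coprime #[xi]%CF s} ->
  let N := \bigcap_(xi <- H) cfker xi in
  forall xi, xi \in H -> xi != 1%R ->
  forall a, a \in G :\: N ->
    ((#|((N :* a) :&: D)%g|)%:R : algC)%R = ((k%:R - cf_on_set xi D) / (size H)%:R)%R.
Proof.
move=> hreg hmu hs Huniq Hlin H1 HM _ Hcop N xi Hxi nxi a.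
rewrite inE => /andP[aN Ga].
have [[sDG _ cardD _] DV D1] := hreg.
have DG x : x \in D -> x \in G := subsetP sDG x.
set V := fun chi : 'CF(G) => cf_on_set chi D.
set b : algC := lam%:R - mu%:R.
set c : algC := k%:R - mu%:R.
have hsC : (s%:R : algC) ^+ 2 = b ^+ 2 + 4 * c.
  have := congr1 (fun z : int => (z%:~R : algC)) hs.
  rewrite /pds_Delta /= !(rmorphD, rmorphM, rmorphXn, rmorphB, rmorphN) /=.
  move=> h; rewrite expr2; apply: (etrans h); rewrite /b /c; ring.
have hq (chi : 'CF(G)) : chi \in H -> chi != 1 -> V chi ^+ 2 = c + b * V chi.
  by move=> Hc nt; apply: (@pds_quad _ _ _ _ _ _ _ chi hreg (Hlin _ Hc) nt).
have AV (chi : 'CF(G)) : chi \in H -> V chi \in Aint.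
  move=> Hc; apply: rpred_sum => d _; apply: Aint_char; exact: lin_charW (Hlin _ Hc).
have V1 : V 1 = k%:R.
  rewrite /V /cf_on_set (eq_bigr (fun _ => 1)) ?sumr_const ?cardD //.
  by move=> d Dd; rewrite cfun1E DG.
have Vint (chi : 'CF(G)) : chi \in H -> V chi \is a Num.int.
  move=> Hc; case: (eqVneq chi 1) => [-> | nt]; first by rewrite V1 rpred_nat.
  apply: (@quad_int _ b c (s%:R) (hq _ Hc nt) hsC) => //; last exact: AV.
    by rewrite /b rpredB ?rpred_nat.
  by rewrite rpred_nat.
have HF (chi : 'CF(G)) q : chi \in H -> prime q -> eqAmod q%:R (V chi) (V (chi ^+ q)).
  move=> Hc pq.
  have e : V (chi ^+ q) = \sum_(d in D) chi d ^+ q.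
    by apply: eq_bigr => d Dd; rewrite exp_cfunE ?DG.
  rewrite e.
  have h1 := @frob_sum q gT (mem D) (fun d => chi d) pq
     (fun d => Aint_char d (lin_charW (Hlin _ Hc))).
  have h2 := fermat_int q (V chi) pq (Vint _ Hc); rewrite eqAmod_sym in h2.
  exact: eqAmod_trans h2 h1.
have HE : forall xi psi q, xi \in H -> psi \in H -> xi != 1 -> psi != 1 -> prime q ->
     ~~ (q %| s)%N -> eqAmod q%:R (V xi) (V psi) -> V xi = V psi.
  move=> x y q Hx Hy nx ny pq nqs e.
  exact: (@quad_cong _ _ b c s q (hq _ Hx nx) (hq _ Hy ny) hsC (AV _ Hx) (AV _ Hy) pq nqs e).
have unif := @uniform _ _ H s V Hlin H1 HM Hcop HE HF.
have ortho g : g \in G -> g \notin N -> \sum_(chi <- H) chi g = 0.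
  move=> Gg; rewrite mem_bigcap_seq => /allPn [psi Hpsi gk].
  have pg : psi g != 1 by rewrite -lin_ker1 ?Hlin.
  have Um : uniq (map (fun chi => psi * chi) H).
    by rewrite map_inj_uniq //; apply: mulrI; apply: lin_char_unitr; apply: Hlin.
  have sub : {subset map (fun chi => psi * chi) H <= H}.
    by move=> x /mapP[y Hy ->]; apply: HM.
  have pe : perm_eq (map (fun chi => psi * chi) H) H.
    apply: (uniq_perm Um Huniq).
    by case: (uniq_min_size Um sub _) => //; rewrite size_map.
  have hS : \sum_(chi <- H) chi g = psi g * \sum_(chi <- H) chi g.
    rewrite -[in LHS](perm_big _ pe) big_map mulr_sumr.
    by apply: eq_bigr => chi _; rewrite cfunE.
  have : (1 - psi g) * \sum_(chi <- H) chi g = 0 by rewrite mulrBl mul1r -hS subrr.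
  by move/eqP; rewrite mulf_eq0 subr_eq0 eq_sym (negbTE pg) /= => /eqP.
have inN g : g \in N -> \sum_(chi <- H) chi g = (size H)%:R.
  rewrite mem_bigcap_seq => /allP hall.
  have Gg : g \in G by apply: (subsetP (cfker_sub 1)); apply: hall.
  rewrite big_seq (eq_bigr (fun _ => 1)) -?big_seq ?sum_seq1 //.
  by move=> chi Hc; apply/eqP; rewrite -lin_ker1 ?Hlin ?hall.
have Ga' : (a^-1)%g \in G by rewrite groupV.
have aN' : (a^-1)%g \notin N.
  apply: contra aN; rewrite !mem_bigcap_seq => /allP h; apply/allP => chi Hc.
  by rewrite -groupV; apply: h.
set T := \sum_(chi <- H) chi (a^-1)%g * V chi.
have T1 : T = (size H)%:R * #|(N :* a)%g :&: D|%:R.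
  rewrite /T big_seq (eq_bigr (fun chi : 'CF(G) => \sum_(d in D) chi (d * a^-1)%g)) -?big_seq; last first.
    move=> chi Hc; rewrite /V /cf_on_set mulr_sumr; apply: eq_bigr => d Dd.
    by rewrite (lin_charM (Hlin _ Hc) (DG _ Dd) Ga') mulrC.
  rewrite exchange_big /= (eq_bigr (fun d => (size H)%:R * ((d \in (N :* a)%g)%:R : algC))).
    by rewrite -mulr_sumr sum_ind2.
  move=> d Dd; rewrite mem_rcoset; case: (boolP ((d * a^-1)%g \in N)) => h.
    by rewrite inN // mulr1.
  by rewrite ortho ?mulr0 // (groupM (DG _ Dd) Ga').
have T2 : T = k%:R - V xi.
  rewrite /T (bigD1_seq 1) //= cfun1E Ga' V1.
  rewrite big_seq_cond (eq_bigr (fun chi : 'CF(G) => chi (a^-1)%g * V xi)) -?big_seq_cond; last first.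
    by move=> chi /andP[Hc nt]; rewrite (unif _ _ Hc Hxi nt nxi).
  rewrite -mulr_suml.
  have hO := ortho _ Ga' aN'; rewrite (bigD1_seq 1) //= cfun1E Ga' in hO.
  move/eqP: hO; rewrite addrC addr_eq0 => /eqP ->.
  rewrite !mulr1n; ring.
have eT : (size H)%:R * #|(N :* a)%g :&: D|%:R = k%:R - cf_on_set xi D by rewrite -T1 T2.
rewrite -eT mulrC mulKf //.
rewrite pnatr_eq0; apply/eqP => e0; by move: H1; rewrite (size0nil e0).
Qed.
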